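(* Let $n,d \in \mathbb{Z}^+$. Let $A$ be a C-recursive integer sequence of order $d$ with initial conditions $A(0)=A(1)=\cdots=A(d-1)=1$, satisfying $$A(n) = c_{d-1} A(n-1) + c_{d-2} A(n-2) + \cdots + c_{0} A(n-d),$$ where $c_0,\dots,c_{d-1}\in\mathbb{Z}$. Let $g(x) := c_{d-1}x^{d-1}+\cdots+c_1x+c_0 \in \mathbb{Z}[x]$, let $R=\mathbb{Z}[x]/I$ with $I=\langle x^d-g(x)\rangle$, and let $f(x)$ be the image of $x^n$ in $R$. Then $A(n)=f(1)$.
   Context: The image of $x^n$ in $R$ is identified with its unique representative in $\mathbb{Z}[x]$ of degree less than $d$ (the remainder of $x^n$ upon division by the monic polynomial $x^d-g(x)$); $f(1)$ denotes the evaluation of this representative at $x=1$. *)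

(* Defs.v *)
From mathcomp Require Import all_boot all_order all_algebra.
Set Implicit Arguments. Unset Strict Implicit. Unset Printing Implicit Defensive.
Import Order.TTheory GRing.Theory Num.Theory.
Local Open Scope ring_scope.

Definition gpoly (d : nat) (c : nat -> int) : {poly int} :=
  \sum_(i < d) c i *: 'X^i.

(* representative of x^n in Z[x]/<x^d - g(x)>: remainder of x^n mod the monic x^d - g *)
Definition xn_rep (d n : nat) (c : nat -> int) : {poly int} :=
  'X^n %% ('X^d - gpoly d c).

(* Main.v *)
Require Import Defs.
From mathcomp Require Import all_boot all_order all_algebra.
Import Order.TTheory GRing.Theory Num.Theory.
Local Open Scope ring_scope.

Section L.
Variable A : nat -> int.

Definition Lf (p : {poly int}) : int := \sum_(i < size p) p`_i * A i.

Lemma Lf_wide (p : {poly int}) N : (size p <= N)%N -> Lf p = \sum_(i < N) p`_i * A i.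
Proof.
move=> hN; rewrite /Lf (big_ord_widen N (fun i => p`_i * A i) hN).
rewrite big_mkcond /=; apply: eq_bigr => i _.
case: ifP => // /negbT; rewrite -leqNgt => h.
by rewrite nth_default // mul0r.
Qed.

Lemma LfD (p q : {poly int}) : Lf (p + q) = Lf p + Lf q.
Proof.
have h1 : (size p <= maxn (size p) (size q))%N by rewrite leq_maxl.
have h2 : (size q <= maxn (size p) (size q))%N by rewrite leq_maxr.
rewrite (Lf_wide _ _ h1) (Lf_wide _ _ h2) (Lf_wide _ _ (size_polyD p q)) -big_split /=.
by apply: eq_bigr => i _; rewrite coefD mulrDl.
Qed.

Lemma LfZ a (p : {poly int}) : Lf (a *: p) = a * Lf p.
Proof.
rewrite (Lf_wide _ _ (size_scale_leq a p)) /Lf mulr_sumr.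
by apply: eq_bigr => i _; rewrite coefZ mulrA.
Qed.

Lemma Lf0 : Lf 0 = 0.
Proof. by rewrite /Lf size_poly0 big_ord0. Qed.
End L.

Theorem lemma3p1 (n d : nat) (c : nat -> int) (A : nat -> int) :
  (0 < n)%N -> (0 < d)%N ->
  (forall k, (k < d)%N -> A k = 1) ->
  (forall m, (d <= m)%N -> A m = \sum_(i < d) c i * A (m - d + i)%N) ->
  A n = (xn_rep d n c).[1].
Proof.
move=> _ hd hA hrec.
set P := 'X^d - gpoly d c.
have gE : gpoly d c = \poly_(i < d) c i by rewrite poly_def.
have sg : (size (gpoly d c) <= d)%N by rewrite gE size_poly.
have sXd : size ('X^d : {poly int}) = d.+1 by rewrite size_polyXn.
have sP : (size P <= d.+1)%N.
  by rewrite /P (leq_trans (size_polyD _ _)) // size_polyN sXd geq_max leqnn (leq_trans sg).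
have monP : P \is monic.
  rewrite monicE /P lead_coefDl ?lead_coefXn // size_polyN sXd ltnS; exact: sg.
have PX : forall k, Lf A ('X^k * P) = 0.
  move=> k.
  have s : (size ('X^k * P)%R <= k + d.+1)%N.
    by rewrite (leq_trans (size_polyMleq _ _)) // size_polyXn addSn /= leq_add2l.
  rewrite (Lf_wide A _ _ s) -(big_mkord xpredT (fun i => ('X^k * P)`_i * A i)).
  rewrite (big_cat_nat (leq0n k) (leq_addr _ _)) /=.
  rewrite big_nat_cond big1 ?add0r; last first.
    by move=> i /andP[/andP[_ hi] _]; rewrite coefXnM hi mul0r.
  rewrite -{1}(add0n k) big_addn addKn big_nat_recr //=.
  rewrite coefXnM ltnNge leq_addl /= addnK coefB coefXn eqxx gE coef_poly ltnn subr0 mul1r.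
  rewrite (hrec (d + k)%N) ?leq_addr //. have -> : (d + k - d = k)%N by rewrite addKn.
  rewrite big_mkord -big_split /= big1 // => i _.
  rewrite coefXnM ltnNge leq_addl /= addnK coefB coefXn gE coef_poly ltn_ord.
  by rewrite (ltn_eqF (ltn_ord i)) sub0r mulNr [(k + i)%N]addnC addNr.
have PQ : forall q, Lf A (q * P) = 0.
  suff H : forall q j, Lf A ('X^j * q * P) = 0.
    by move=> q; have := H q 0%N; rewrite expr0 mul1r.
  move=> q; elim/poly_ind: q => [|q a IH] j; first by rewrite mulr0 mul0r Lf0.
  rewrite (mulrDr ('X^j)) (mulrDl _ _ P) LfD.
  have -> : ('X^j * (q * 'X) = 'X^(j.+1) * q)%R by rewrite exprSr -mulrA [q * _]mulrC.
  rewrite IH [_ * a%:P]mulrC mul_polyC -scalerAl LfZ PX mulr0 add0r //.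
have XnA : forall m, Lf A 'X^m = A m.
  move=> m; rewrite /Lf size_polyXn big_ord_recr /= coefXn eqxx mul1r big1 ?add0r //.
  by move=> i _; rewrite coefXn (ltn_eqF (ltn_ord i)) mul0r.
rewrite -XnA (Pdiv.IdomainMonic.divp_eq monP 'X^n) LfD PQ add0r /xn_rep -/P.
have sr : (size ('X^n %% P)%R <= d)%N.
  have := ltn_modp 'X^n P; rewrite monic_neq0 // => h.
  by rewrite -ltnS (leq_trans h).
rewrite (Lf_wide A _ _ sr) (horner_coef_wide 1 sr).
by apply: eq_bigr => i _; rewrite hA // expr1n.
Qed.
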